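(* Let $n\ge1$ be odd and $(\rho_i)_{i=0}^n$ a sequence in $\mathbb F$. The following are equivalent: (i) $(\rho_i)$ is constrained; (ii) the sequences $\rho_0,\rho_2,\ldots,\rho_{n-1}$ and $\rho_n^{-1},\rho_{n-2}^{-1},\ldots,\rho_1^{-1}$ are equal and geometric; (iii) there exist nonzero $s,\xi\in\mathbb F$ such that $\rho_i=\xi s^{i/2}$ for $i$ even and $\rho_i=\xi^{-1}s^{(i-n)/2}$ for $i$ odd ($0\le i\le n$). If these hold then $s=\rho_i/\rho_{i-2}$ for $2\le i\le n$ and $\xi=\rho_0$.
   Context: A sequence $(\rho_i)_{i=0}^n$ of scalars in a field $\mathbb F$ is constrained if (i) $\rho_i\rho_{n-i}=1$ for $0\le i\le n$, and (ii) there exist $a,b,c\in\mathbb F$, not all zero, with $a\rho_{i-1}+b\rho_i+c\rho_{i+1}=0$ for $1\le i\le n-1$. A sequence is geometric if all its terms are nonzero and the ratio of consecutive terms is constant. *)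

(* Defs.v *)
From HB Require Import structures.
From mathcomp Require Import all_boot all_order all_algebra.
Set Implicit Arguments. Unset Strict Implicit. Unset Printing Implicit Defensive.
Import Order.TTheory GRing.Theory Num.Theory.
Local Open Scope ring_scope.

(* A finite sequence (rho_i)_{i=0}^n is modelled by rho : nat -> F,
   only the values at 0..n being relevant. *)

Definition constrained (F : fieldType) (n : nat) (rho : nat -> F) : Prop :=
  (forall i : nat, (i <= n)%N -> rho i * rho (n - i)%N = 1) /\
  (exists a b c : F, ~ (a = 0 /\ b = 0 /\ c = 0) /\
     forall i : nat, (1 <= i)%N -> (i <= n - 1)%N ->
       a * rho (i - 1)%N + b * rho i + c * rho i.+1 = 0).

Definition geometric (F : fieldType) (s : seq F) : Prop :=
  (forall i : nat, (i < size s)%N -> s`_i != 0) /\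
  (exists r : F, forall i : nat, (i.+1 < size s)%N -> s`_i.+1 / s`_i = r).

(* Main.v *)
Require Import Defs.
From HB Require Import structures.
From mathcomp Require Import all_boot all_order all_algebra.
From mathcomp Require Import zify ring.
Import Order.TTheory GRing.Theory Num.Theory.
Local Open Scope ring_scope.

Definition formd {F : fieldType} (n : nat) (rho : nat -> F) (s xi : F) : Prop :=
    forall i : nat, (i <= n)%N ->
      rho i = if ~~ odd i then xi * s ^+ (i %/ 2)
              else xi^-1 * s ^- ((n - i) %/ 2).

Definition Sym {F : fieldType} (n : nat) (rho : nat -> F) : Prop :=
  forall i : nat, (i <= n)%N -> rho i * rho (n - i)%N = 1.

Lemma sym_nz {F : fieldType} {n} {rho : nat -> F} : Sym n rho ->
  forall i, (i <= n)%N -> rho i != 0.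
Proof.
move=> hs i hi; apply/eqP=> h0; have := hs i hi; rewrite h0 mul0r => /eqP.
by rewrite eq_sym oner_eq0.
Qed.

Lemma sym_inv {F : fieldType} {n} {rho : nat -> F} : Sym n rho ->
  forall i, (i <= n)%N -> rho i = (rho (n - i)%N)^-1.
Proof.
move=> hs i hi.
have hnz : rho (n - i)%N != 0 by apply: sym_nz hs _ _; lia.
by apply: (mulIf hnz); rewrite hs // mulVf.
Qed.

Lemma evens_form {F : fieldType} {n} {rho : nat -> F} s xi : odd n -> Sym n rho ->
  (forall k, (2 * k <= n)%N -> rho (2 * k)%N = xi * s ^+ k) -> formd n rho s xi.
Proof.
move=> hn hs he i hi.
case: ifP => hio.
  have -> : i = (2 * (i %/ 2))%N by lia.
  rewrite he; last by lia.
  by have -> : ((2 * (i %/ 2)) %/ 2 = i %/ 2)%N by lia.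
rewrite (sym_inv hs i hi).
have -> : (n - i = 2 * ((n - i) %/ 2))%N by lia.
rewrite he; last by lia.
rewrite invfM.
by have -> : ((2 * ((n - i) %/ 2)) %/ 2 = (n - i) %/ 2)%N by lia.
Qed.

Lemma form_nz {F : fieldType} {n} {rho : nat -> F} s xi : s != 0 -> xi != 0 ->
  formd n rho s xi -> forall i, (i <= n)%N -> rho i != 0.
Proof.
move=> hs hx hf i hi; rewrite hf //; case: ifP => _.
  by rewrite mulf_neq0 // expf_neq0.
by rewrite mulf_neq0 ?invr_neq0 // expf_neq0.
Qed.

Lemma form_step {F : fieldType} {n} {rho : nat -> F} s xi : odd n -> s != 0 -> xi != 0 ->
  formd n rho s xi -> forall i, (2 <= i)%N -> (i <= n)%N -> rho i = s * rho (i - 2)%N.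
Proof.
move=> hn hs hx hf i h2 hi.
rewrite (hf i hi) (hf (i - 2)%N); last by lia.
have -> : odd (i - 2)%N = odd i by lia.
case: ifP => hio.
  have -> : (i %/ 2 = ((i - 2) %/ 2).+1)%N by lia.
  by rewrite exprS mulrCA.
have -> : ((n - (i - 2)) %/ 2 = ((n - i) %/ 2).+1)%N by lia.
rewrite exprS invfM; field; by rewrite ?(expf_neq0 _ hs) ?hs ?hx.
Qed.

Lemma form_sym {F : fieldType} {n} {rho : nat -> F} s xi : odd n -> s != 0 -> xi != 0 ->
  formd n rho s xi -> Sym n rho.
Proof.
move=> hn hs hx hf i hi.
rewrite (hf i hi) (hf (n - i)%N); last by lia.
have -> : odd (n - i)%N = ~~ odd i by lia.
have -> : (n - (n - i) = i)%N by lia.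
case: ifP => hio /=; field; by rewrite ?(expf_neq0 _ hs) ?hs ?hx.
Qed.

Lemma step_form {F : fieldType} {n} {rho : nat -> F} s : odd n -> Sym n rho ->
  (forall i, (2 <= i)%N -> (i <= n)%N -> rho i = s * rho (i - 2)%N) ->
  formd n rho s (rho 0%N).
Proof.
move=> hn hs hst; apply: evens_form => //.
elim=> [|k IH] hk; first by rewrite muln0 expr0 mulr1.
rewrite hst; [|lia|lia].
have -> : (2 * k.+1 - 2 = 2 * k)%N by lia.
rewrite IH; last by lia.
by rewrite exprS mulrCA.
Qed.

Lemma sym_inv' {F : fieldType} {n} {rho : nat -> F} : Sym n rho ->
  forall i, (i <= n)%N -> rho (n - i)%N = (rho i)^-1.
Proof.
move=> hs i hi; rewrite (sym_inv hs (n - i)); last by lia.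
by rewrite subKn.
Qed.

Lemma constr_step {F : fieldType} {n} {rho : nat -> F} : odd n -> (1 <= n)%N ->
  constrained n rho -> exists s, s != 0 /\
  (forall i, (2 <= i)%N -> (i <= n)%N -> rho i = s * rho (i - 2)%N).
Proof.
move=> hn hn1 [hs [a [b [c [habc hrec]]]]].
have hnz := sym_nz hs.
case: (n =P 1%N) => hn1'.
  by exists 1; split; [exact: oner_neq0 | lia].
suff [s hst] : exists s,
    forall i, (2 <= i)%N -> (i <= n)%N -> rho i = s * rho (i - 2)%N.
  exists s; split=> //; apply/eqP=> s0.
  have := hst 2%N isT ltac:(lia); rewrite s0 mul0r; apply/eqP; apply: hnz; lia.
case: (b =P 0) => hb.
  have hc : c != 0.
    apply/eqP=> hc; apply: habc; split; last by split.
    have := hrec 1%N isT ltac:(lia); rewrite hb hc !mul0r !addr0 => /eqP.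
    by rewrite mulf_eq0 (negbTE (hnz 0%N isT)) orbF => /eqP.
  exists (- a / c) => i h2 hi.
  have := hrec (i - 1)%N ltac:(lia) ltac:(lia).
  rewrite hb mul0r addr0.
  have -> : (i - 1 - 1 = i - 2)%N by lia.
  have -> : (i - 1).+1 = i by lia.
  move=> /eqP; rewrite addrC addr_eq0 => /eqP h.
  have -> : rho i = c^-1 * (c * rho i) by rewrite mulrA mulVf // mul1r.
  rewrite h; field; exact: hc.
have hsq : forall j, (1 <= j)%N -> (j <= n - 1)%N ->
    rho j ^+ 2 = rho (j - 1)%N * rho j.+1.
  move=> j hj1 hj2.
  have E1 := hrec j hj1 hj2.
  have E2 := hrec (n - j)%N ltac:(lia) ltac:(lia).
  have e1 : (n - j - 1 = n - j.+1)%N by lia.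
  have e2 : (n - j).+1 = (n - (j - 1))%N by lia.
  rewrite e1 e2 in E2.
  rewrite !(sym_inv' hs) in E2; try lia.
  have hx := hnz (j - 1)%N ltac:(lia).
  have hy := hnz j ltac:(lia).
  have hz := hnz j.+1 ltac:(lia).
  have : b * (rho j ^+ 2 - rho (j - 1)%N * rho j.+1) = 0.
    rewrite (_ : b * _ = rho j * (a * rho (j - 1)%N + b * rho j + c * rho j.+1)
       - rho (j - 1)%N * rho j * rho j.+1 *
          (a * (rho j.+1)^-1 + b * (rho j)^-1 + c * (rho (j - 1)%N)^-1)).
      by rewrite E1 E2; ring.
    by field; rewrite hx hy hz.
  move/eqP; rewrite mulf_eq0 => /orP [/eqP // | ].
  by rewrite subr_eq0 => /eqP.
pose q := rho 1%N / rho 0%N.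
have hq : forall j, (j.+1 <= n)%N -> rho j.+1 = q * rho j.
  elim=> [|j IH] hj.
    by rewrite /q mulfVK // hnz.
  apply: (mulfI (hnz j ltac:(lia))).
  have := hsq j.+1 isT ltac:(lia).
  have -> : (j.+1 - 1 = j)%N by lia.
  move=> <-; rewrite expr2 {1}IH; last by lia.
  ring.
exists (q * q) => i h2 hi.
have -> : i = (i - 2).+2 by lia.
rewrite hq; last by lia.
rewrite hq; last by lia.
have -> : ((i - 2).+2 - 2 = i - 2)%N by lia.
by rewrite mulrA.
Qed.

Lemma form_constr {F : fieldType} {n} {rho : nat -> F} s xi : odd n -> s != 0 -> xi != 0 ->
  formd n rho s xi -> constrained n rho.
Proof.
move=> hn hs hx hf; split; first by move=> i hi; exact: (form_sym _ _ hn hs hx hf i hi).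
exists s, 0, (-1); split.
  by move=> [s0 _]; move: hs; rewrite s0 eqxx.
move=> i h1 h2.
rewrite (form_step _ _ hn hs hx hf i.+1); [|lia|lia].
have -> : (i.+1 - 2 = i - 1)%N by lia.
ring.
Qed.

Lemma G_form {F : fieldType} {n} {rho : nat -> F} : odd n -> (1 <= n)%N ->
  mkseq (fun k => rho (2 * k)%N) (n.+1 %/ 2) =
  mkseq (fun k => (rho (n - 2 * k)%N)^-1) (n.+1 %/ 2) ->
  geometric (mkseq (fun k => rho (2 * k)%N) (n.+1 %/ 2)) ->
  exists s xi : F, [/\ s != 0, xi != 0 & formd n rho s xi].
Proof.
move=> hn hn1 heq [hnz0 [r hr]].
have he : forall k, (k < n.+1 %/ 2)%N -> rho (2 * k)%N = (rho (n - 2 * k)%N)^-1.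
  move=> k hk; have := congr1 (fun s => nth 0 s k) heq.
  by rewrite /= !nth_mkseq.
have hnz : forall k, (k < n.+1 %/ 2)%N -> rho (2 * k)%N != 0.
  move=> k hk; have := hnz0 k; rewrite size_mkseq nth_mkseq //; exact.
have hp : forall k, (k < n.+1 %/ 2)%N -> rho (2 * k)%N * rho (n - 2 * k)%N = 1.
  move=> k hk; have h1 := hnz k hk.
  have h2 : rho (n - 2 * k)%N != 0.
    by apply/eqP=> h0; move: h1; rewrite he // h0 invr0 eqxx.
  by rewrite he // mulVf.
have hs : Sym n rho.
  move=> i hi; case: (boolP (odd i)) => hio.
    have := hp ((n - i) %/ 2)%N ltac:(lia).
    have -> : (2 * ((n - i) %/ 2) = n - i)%N by lia.
    have -> : (n - (n - i) = i)%N by lia.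
    by rewrite mulrC.
  have := hp (i %/ 2)%N ltac:(lia).
  by have -> : (2 * (i %/ 2) = i)%N by lia.
pose s := if n == 1%N then 1 else r.
have hev : forall k, (2 * k <= n)%N -> rho (2 * k)%N = rho 0%N * s ^+ k.
  elim=> [|k IH] hk; first by rewrite muln0 expr0 mulr1.
  have hn3 : (n == 1%N) = false by apply/negbTE; lia.
  have := hr k; rewrite size_mkseq !nth_mkseq; [|lia|lia].
  move=> /(_ ltac:(lia)) h.
  have hsr : s = r by rewrite /s hn3.
  rewrite exprS mulrCA -IH; last by lia.
  by rewrite hsr -h divfK // hnz //; lia.
exists s, (rho 0%N); split.
- rewrite /s; case: ifP => h1; first exact: oner_neq0.
  have := hr 0%N; rewrite size_mkseq !nth_mkseq; [|lia|lia].
  move=> /(_ ltac:(lia)) <-.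
  by rewrite mulf_neq0 ?invr_neq0 // hnz //; lia.
- by rewrite -(muln0 2) hnz //; lia.
- exact: evens_form.
Qed.

Lemma form_G {F : fieldType} {n} {rho : nat -> F} s xi : odd n -> s != 0 -> xi != 0 ->
  formd n rho s xi ->
  mkseq (fun k => rho (2 * k)%N) (n.+1 %/ 2) =
  mkseq (fun k => (rho (n - 2 * k)%N)^-1) (n.+1 %/ 2) /\
  geometric (mkseq (fun k => rho (2 * k)%N) (n.+1 %/ 2)).
Proof.
move=> hn hs hx hf.
have hE : forall k, (2 * k <= n)%N -> rho (2 * k)%N = xi * s ^+ k.
  move=> k hk; rewrite hf //.
  have -> : odd (2 * k) = false by lia.
  by have -> : ((2 * k) %/ 2 = k)%N by lia.
have hO : forall k, (2 * k <= n)%N -> (rho (n - 2 * k)%N)^-1 = xi * s ^+ k.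
  move=> k hk; rewrite hf; last by lia.
  have -> : odd (n - 2 * k) = true by lia.
  have -> : ((n - (n - 2 * k)) %/ 2 = k)%N by lia.
  by rewrite /= invfM !invrK.
split.
  apply: (eq_from_nth (x0 := 0)); first by rewrite !size_mkseq.
  move=> i; rewrite size_mkseq => hi; rewrite !nth_mkseq // hE ?hO //; lia.
split.
  move=> i; rewrite size_mkseq => hi; rewrite nth_mkseq // hE; last by lia.
  by rewrite mulf_neq0 // expf_neq0.
exists s => i; rewrite size_mkseq => hi; rewrite !nth_mkseq; [|lia|lia].
rewrite !hE; [|lia|lia].
by rewrite exprS mulrCA mulfK // mulf_neq0 // expf_neq0.
Qed.

Theorem proposition11p6 (F : fieldType) (n : nat) (rho : nat -> F)
    (hn1 : (1 <= n)%N) (hnodd : odd n) :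
  let evens := mkseq (fun k => rho (2 * k)%N) (n.+1 %/ 2) in
  let odds_inv := mkseq (fun k => (rho (n - 2 * k)%N)^-1) (n.+1 %/ 2) in
  let form := fun s xi : F =>
    forall i : nat, (i <= n)%N ->
      rho i = if ~~ odd i then xi * s ^+ (i %/ 2)
              else xi^-1 * s ^- ((n - i) %/ 2) in
  [/\ (constrained n rho <-> (evens = odds_inv /\ geometric evens)),
      ((evens = odds_inv /\ geometric evens) <->
         exists s xi : F, [/\ s != 0, xi != 0 & form s xi]) &
      (forall s xi : F, s != 0 -> xi != 0 -> form s xi ->
         (forall i : nat, (2 <= i)%N -> (i <= n)%N -> s = rho i / rho (i - 2)%N)
         /\ xi = rho 0%N)].
Proof.
move=> evens odds_inv form.
have CE : constrained n rho -> exists s xi : F, [/\ s != 0, xi != 0 & form s xi].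
  move=> hc; have [hs _] := hc.
  have [s [hs0 hst]] := constr_step hnodd hn1 hc.
  exists s, (rho 0%N); split=> //.
    by apply: (sym_nz hs).
  exact: (step_form s hnodd hs hst).
have EG : (exists s xi : F, [/\ s != 0, xi != 0 & form s xi]) ->
    evens = odds_inv /\ geometric evens.
  by move=> [s [xi [h1 h2 h3]]]; exact: (form_G s xi hnodd h1 h2 h3).
have GE : evens = odds_inv /\ geometric evens ->
    exists s xi : F, [/\ s != 0, xi != 0 & form s xi].
  by move=> [h1 h2]; exact: (G_form hnodd hn1 h1 h2).
split.
- split=> [h|h]; first exact: EG (CE h).
  have [s [xi [h1 h2 h3]]] := GE h; exact: (form_constr s xi hnodd h1 h2 h3).
- by split.
- move=> s xi hs hx hf; split.
    move=> i h2 hi; rewrite (form_step s xi hnodd hs hx hf i h2 hi) mulfK //.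
    apply: (form_nz s xi hs hx hf); lia.
  by rewrite (hf 0%N isT) /= expr0 mulr1.
Qed.
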